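(* For every $r\in(0,\tfrac12]$ there is a constant $c_r>0$ such that the following holds. For every integer $N\ge 2$ and every ORN design on $N$ nodes that guarantees throughput $r$, the maximum latency $L_{\max}$ of the design satisfies \[ L_{\max}\;\ge\; c_r\, h\left[(\varepsilon N)^{1/h}+N^{1/(h+1)}\right] \;=\; c_r\,L^*(r,N), \] where $h=\lfloor \frac{1}{2r}\rfloor$ and $\varepsilon=h+1-\frac{1}{2r}$.
   Context: Nodes are $[N]=\{1,\dots,N\}$. A connection schedule of size $N$ and period $T\ge1$ is a sequence of permutations $\pi_0,\dots,\pi_{T-1}$ of $[N]$; write $\pi_t=\pi_{t \bmod T}$ for all $t\in\mathbb Z$. Its virtual topology is the directed graph $G$ with vertex set $[N]\times\mathbb Z$ whose edges are the virtual edges $(i,t)\to(i,t+1)$ and the physical edges $(i,t)\to(\pi_t(i),t+1)$, for all $i\in[N]$, $t\in\mathbb Z$. The latency of a finite directed path in $G$ is its number of edges. For $a,b\in[N]$, $t\in\mathbb Z$, $\mathcal P(a,b,t)$ is the set of paths in $G$ from $(a,t)$ to some vertex $(b,t')$, and $\mathcal P$ is the set of all paths. A flow is a function $f:\mathcal P\to[0,\infty)$; the load on an edge $e$ is $F(f,e)=\sum_{P\ni e}f(P)$; $f$ is feasible if $F(f,e)\le 1$ for every physical edge $e$. An oblivious routing scheme $R$ assigns to each $(a,b,t)\in[N]\times[N]\times\mathbb Z$ a flow $R_{a,b,t}$ supported on $\mathcal P(a,b,t)$ with $\sum_P R_{a,b,t}(P)=1$, which is periodic: $R_{a,b,t+T}$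 is obtained from $R_{a,b,t}$ by shifting every path by $T$ in the time coordinate. An ORN design on $N$ nodes is a connection schedule together with an oblivious routing scheme on its virtual topology; its maximum latency is the maximum latency of a path $P$ with $R_{a,b,t}(P)>0$ for some $a,b,t$. A demand function $D$ assigns to each $t\in\mathbb Z$ an $N\times N$ matrix $D(t)$ with nonnegative entries $D(t,a,b)$; it requests throughput equal to the supremum over $t$ of the maximum row sum or column sum of $D(t)$. The induced flow is $f(R,D)=\sum_{a,b,t}D(t,a,b)R_{a,b,t}$. The design guarantees throughput $r$ if $f(R,D)$ is feasible for every demand function $D$ requesting throughput at most $r$. For $r\in(0,\frac12]$, $(h,\varepsilon)$ denotes the unique solution in $\mathbb N\times(0,1]$ of $\frac1{2r}=h+1-\varepsilon$ (equivalently $h=\lfloor\frac1{2r}\rfloor$, $\varepsilon=h+1-\frac1{2r}$), and $L^*(r,N)=h\left(N^{1/(h+1)}+(\varepsilon N)^{1/h}\right)$. *)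

(* Defs.v *)
From HB Require Import structures.
From mathcomp Require Import all_boot all_order all_algebra all_fingroup.
From mathcomp Require Import all_classical all_reals all_analysis.
Set Implicit Arguments. Unset Strict Implicit. Unset Printing Implicit Defensive.
Import Order.TTheory GRing.Theory Num.Theory.
Local Open Scope ring_scope.
Local Open Scope classical_set_scope.

(* Nodes are 'I_N (i.e. {0,..,N-1} instead of {1,..,N}); times are int. *)
Definition vertex (N : nat) := ('I_N * int)%type.

(* A finite directed path: its first vertex and the list of subsequent vertices. *)
Definition vpath (N : nat) := (vertex N * seq (vertex N))%type.

Section ORN.
Variable N : nat.

Definition sched_period (sched : seq {perm 'I_N}) : nat := size sched.

Definition pi_t (sched : seq {perm 'I_N}) (t : int) : {perm 'I_N} :=
  nth 1%g sched `|(t %% (size sched)%:Z)%Z|%N.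

Definition is_edge (sched : seq {perm 'I_N}) (u v : vertex N) : bool :=
  (v.2 == u.2 + 1) && ((v.1 == u.1) || (v.1 == pi_t sched u.2 u.1)).

Definition is_phys (sched : seq {perm 'I_N}) (u v : vertex N) : bool :=
  (v.2 == u.2 + 1) && (v.1 == pi_t sched u.2 u.1).

Definition is_path (sched : seq {perm 'I_N}) (P : vpath N) : bool :=
  path (is_edge sched) P.1 P.2.

Definition latency (P : vpath N) : nat := size P.2.

Definition path_edges (P : vpath N) : seq (vertex N * vertex N) :=
  zip (P.1 :: P.2) P.2.

Definition path_last (P : vpath N) : vertex N := last P.1 P.2.

Definition paths_from_to (sched : seq {perm 'I_N}) (a b : 'I_N) (t : int)
  (P : vpath N) : bool :=
  [&& is_path sched P, P.1 == (a, t) & (path_last P).1 == b].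

Definition shift_vertex (s : int) (v : vertex N) : vertex N := (v.1, v.2 + s).
Definition shift_path (s : int) (P : vpath N) : vpath N :=
  (shift_vertex s P.1, map (shift_vertex s) P.2).

Variable R : realType.

Definition load (sched : seq {perm 'I_N}) (f : vpath N -> \bar R)
  (e : vertex N * vertex N) : \bar R :=
  \esum_(P in [set P | is_path sched P /\ e \in path_edges P]) f P.

Definition feasible (sched : seq {perm 'I_N}) (f : vpath N -> \bar R) : Prop :=
  forall u v : vertex N, is_phys sched u v -> (load sched f (u, v) <= 1)%E.

Definition is_ORN_design (sched : seq {perm 'I_N})
  (Rt : 'I_N -> 'I_N -> int -> vpath N -> R) : Prop :=
  [/\ (0 < size sched)%N,
      (forall a b t P, 0 <= Rt a b t P),
      (forall a b t P, Rt a b t P != 0 -> paths_from_to sched a b t P),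
      (forall a b t, \esum_(P in [set: vpath N]) (Rt a b t P)%:E = 1%E) &
      (forall a b t P,
          Rt a b (t + (size sched)%:Z) (shift_path (size sched)%:Z P)
          = Rt a b t P)].

Definition demand_le (D : int -> 'I_N -> 'I_N -> R) (r : R) : Prop :=
  [/\ (forall t a b, 0 <= D t a b),
      (forall t a, \sum_(b < N) D t a b <= r) &
      (forall t b, \sum_(a < N) D t a b <= r)].

Definition induced_flow (Rt : 'I_N -> 'I_N -> int -> vpath N -> R)
  (D : int -> 'I_N -> 'I_N -> R) (P : vpath N) : \bar R :=
  \esum_(x in [set: int * ('I_N * 'I_N)])
     (D x.1 x.2.1 x.2.2 * Rt x.2.1 x.2.2 x.1 P)%:E.

Definition guarantees_throughput (sched : seq {perm 'I_N})
  (Rt : 'I_N -> 'I_N -> int -> vpath N -> R) (r : R) : Prop :=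
  forall D, demand_le D r -> feasible sched (induced_flow Rt D).

(* L bounds the latency of every path used by the routing scheme;
   the maximum latency L_max is the least such L. *)
Definition latency_bounded_by (Rt : 'I_N -> 'I_N -> int -> vpath N -> R)
  (L : nat) : Prop :=
  forall a b t P, 0 < Rt a b t P -> (latency P <= L)%N.

End ORN.

Definition h_of {R : realType} (r : R) : nat := Num.truncn (1 / (2 * r)).
Definition eps_of {R : realType} (r : R) : R := (h_of r)%:R + 1 - 1 / (2 * r).

Definition Lstar {R : realType} (r : R) (N : nat) : R :=
  (h_of r)%:R * ((N%:R) `^ ((h_of r)%:R + 1)^-1
                 + (eps_of r * N%:R) `^ ((h_of r)%:R)^-1).

(* Main.v *)
Require Import Defs.
From HB Require Import structures.
From mathcomp Require Import all_boot all_order all_algebra all_fingroup.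
From mathcomp Require Import all_classical all_reals all_analysis.
From mathcomp Require Import zify ring lra.
Import Order.TTheory GRing.Theory Num.Theory.

Module Part1.
Set Implicit Arguments. Unset Strict Implicit. Unset Printing Implicit Defensive.
Local Open Scope ring_scope.

Section Walk.
Variable N : nat.
Variable sched : seq {perm 'I_N}.

Fixpoint wp (t : int) (n : nat) (S : nat -> bool) : {perm 'I_N} :=
  if n is n'.+1 then (wp t n' S * (if S n' then pi_t sched (t + n'%:Z) else 1))%g
  else 1%g.

Lemma wpS t n S x :
  wp t n.+1 S x = (if S n then pi_t sched (t + n%:Z) else 1%g) (wp t n S x).
Proof. by rewrite /= permM. Qed.

Lemma wp_ext t n S S' : (forall j, (j < n)%N -> S j = S' j) -> wp t n S = wp t n S'.
Proof.
elim: n => [|n IH] H //=.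
rewrite IH ?H // => j Hj; apply: H; lia.
Qed.

Lemma wp_add t n m S x :
  wp t (n + m) S x = wp (t + n%:Z) m (fun j => S (n + j)%N) (wp t n S x).
Proof.
elim: m => [|m IH]; first by rewrite addn0 /= perm1.
rewrite addnS !wpS IH; congr ((if _ then pi_t _ _ else _) _).
by rewrite PoszD addrA.
Qed.

Lemma wp_stop t n m S x : (forall j, (n <= j < n + m)%N -> ~~ S j) ->
  wp t (n + m) S x = wp t n S x.
Proof.
elim: m => [|m IH] H; first by rewrite addn0.
rewrite addnS wpS IH; last by move=> j Hj; apply: H; lia.
by rewrite (negbTE (H (n + m)%N _)) ?perm1 //; lia.
Qed.

Definition hop (P : vpath N) (j : nat) : bool :=
  (j < size P.2)%N &&
  is_phys sched (nth P.1 (P.1 :: P.2) j) (nth P.1 (P.1 :: P.2) j.+1).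

Lemma path_nth (P : vpath N) a t : is_path sched P -> P.1 = (a, t) ->
  forall i, (i <= size P.2)%N ->
  nth P.1 (P.1 :: P.2) i = (wp t i (hop P) a, t + i%:Z).
Proof.
case: P => v l /= Hp Hv; subst v.
elim => [|i IH] Hi; first by rewrite /= perm1 addr0.
move/(pathP (a,t)): (Hp) => /(_ i Hi) He.
have E1 : nth (a, t) ((a, t) :: l) i.+1 = nth (a, t) l i by [].
rewrite wpS.
have Hh : hop (a, t, l) i = is_phys sched (nth (a, t) ((a, t) :: l) i) (nth (a, t) l i).
  by rewrite /hop /= Hi.
rewrite Hh.
move: He; rewrite IH; last lia.
set X := wp t i (hop (a, t, l)) a.
rewrite E1; case: (nth (a, t) l i) => y ty.
rewrite /is_edge /is_phys /= => /andP[/eqP -> Hy].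
rewrite eqxx /= -addrA -(PoszD i 1) addn1.
case: eqP => [->|Hne] //.
by move: Hy; rewrite perm1 => /orP[/eqP ->|/eqP //].
Qed.

Lemma path_edge_in (P : vpath N) i : (i < size P.2)%N ->
  (nth P.1 (P.1 :: P.2) i, nth P.1 (P.1 :: P.2) i.+1) \in path_edges P.
Proof.
move=> Hi; rewrite /path_edges.
have Hz : (i < size (zip (P.1 :: P.2) P.2))%N by rewrite size_zip /=; lia.
have := mem_nth (P.1, P.1) Hz.
by rewrite nth_zip_cond Hz.
Qed.

Lemma path_last_nth (P : vpath N) : path_last P = nth P.1 (P.1 :: P.2) (size P.2).
Proof. by rewrite /path_last (last_nth P.1). Qed.

End Walk.

Definition Sg h L (g : {ffun 'I_h -> 'I_L.+1}) (j : nat) : bool :=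
  [exists k, (g k : nat) == j].

Lemma code_exists (H : nat -> bool) n h L : (n <= L)%N ->
  (count H (iota 0 n) <= h)%N ->
  exists g : {ffun 'I_h -> 'I_L.+1}, forall j, (j < n)%N -> Sg g j = H j.
Proof.
move=> HnL Hc.
set pre := [seq j <- iota 0 n | H j].
have Hsz : (size pre <= h)%N by rewrite size_filter.
have Hpre x : x \in pre -> (x < n)%N.
  by rewrite mem_filter mem_iota => /andP[_ /andP[_]]; rewrite add0n.
have Hnth k : nat_of_ord (inord (nth L pre k) : 'I_L.+1) = nth L pre k.
  apply: inordK; case: (ltnP k (size pre)) => Hk.
    have H1 := Hpre _ (mem_nth L Hk); rewrite ltnS; exact: (leq_trans (ltnW H1) HnL).
  by rewrite nth_default.
exists [ffun k : 'I_h => (inord (nth L pre k) : 'I_L.+1)] => j Hj.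
apply/idP/idP.
- move/existsP=> [k]; rewrite ffunE Hnth => /eqP Hk.
  case: (ltnP k (size pre)) => Hk2.
    by have := mem_nth L Hk2; rewrite Hk mem_filter => /andP[].
  by move: Hk; rewrite nth_default //; lia.
- move=> HjH.
  have Hin : j \in pre by rewrite mem_filter HjH mem_iota; lia.
  have Hidx : (index j pre < h)%N by rewrite (leq_trans _ Hsz) // index_mem.
  apply/existsP; exists (Ordinal Hidx); rewrite ffunE Hnth /=.
  by rewrite nth_index.
Qed.

End Part1.
Import Part1.

Module Part2.
Set Implicit Arguments. Unset Strict Implicit. Unset Printing Implicit Defensive.
Local Open Scope ring_scope.

Lemma count_iotaS (H : nat -> bool) n :
  count H (iota 0 n.+1) = (count H (iota 0 n) + H n)%N.
Proof. by rewrite -addn1 iotaD count_cat /= add0n addn0. Qed.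

Lemma count_split (H : nat -> bool) i m :
  count H (iota 0 (i + m)) =
  (count H (iota 0 i) + count (fun j => H (i + j)%N) (iota 0 m))%N.
Proof. by rewrite iotaD count_cat add0n; have := iotaDl i 0 m; rewrite addn0 => ->; rewrite count_map. Qed.

Lemma central_exists (H : nat -> bool) l h :
  (0 < count H (iota 0 l))%N -> (count H (iota 0 l) <= h.*2.+1)%N ->
  exists i, [/\ (i < l)%N, H i, (count H (iota 0 i) <= h)%N &
    (count (fun j => H (i.+1 + j)%N) (iota 0 (l - i.+1)) <= h)%N].
Proof.
set k := count H (iota 0 l) => Hk0 Hk.
set q := minn k.-1 h.
have exP : exists n, (q < count H (iota 0 n.+1))%N.
  exists l.-1; rewrite prednK; first by rewrite /q; lia.
  by case: l @k Hk0 Hk {q} => //.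
case: (ex_minnP exP) => i Hi Hmin.
have Hci : (count H (iota 0 i) <= q)%N.
  case: i Hi Hmin => [|i] Hi Hmin; first by [].
  by rewrite leqNgt; apply/negP => /Hmin; lia.
move: Hi; rewrite count_iotaS => Hi.
have Hhi : H i by case: (H i) Hi; lia.
have Hil : (i < l)%N.
  rewrite ltnNge; apply/negP => Hli.
  have := count_split H l (i - l); rewrite subnKC //; move=> E.
  move: Hci; rewrite E /q -/k; lia.
exists i; split => //; first by rewrite /q in Hci; lia.
have := count_split H i.+1 (l - i.+1); rewrite subnKC; last lia; rewrite count_iotaS Hhi -/k.
rewrite /q in Hci; lia.
Qed.

Section Summary.
Variable N : nat.
Variable sched : seq {perm 'I_N}.

Lemma path_summary (P : vpath N) a t b L h :
 paths_from_to sched a b t P -> (size P.2 <= L)%N -> a != b ->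
 [/\ (forall i, (i < size P.2)%N -> hop sched P i ->
        ((wp sched t i (hop sched P) a, t + i%:Z),
         (pi_t sched (t + i%:Z) (wp sched t i (hop sched P) a), t + i%:Z + 1))
          \in path_edges P),
     (0 < count (hop sched P) (iota 0 (size P.2)))%N &
     ((count (hop sched P) (iota 0 (size P.2)) <= h.*2.+1)%N ->
      exists i, [/\ (i < size P.2)%N, hop sched P i,
        (exists g : {ffun 'I_h -> 'I_L.+1},
            wp sched t i (Sg g) = wp sched t i (hop sched P)) &
        (exists g : {ffun 'I_h -> 'I_L.+1},
            b = wp sched (t + i%:Z + 1) L (Sg g)
                  (pi_t sched (t + i%:Z) (wp sched t i (hop sched P) a)))])].
Proof.
move=> /and3P[Hp /eqP Hv /eqP Hb] HL Hab.
set H := hop sched P; set l := size P.2.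
have Hn := path_nth Hp Hv.
have Hbw : b = wp sched t l H a.
  by rewrite -Hb path_last_nth Hn.
have Hstep i : (i < l)%N -> H i ->
  wp sched t i.+1 H a = pi_t sched (t + i%:Z) (wp sched t i H a).
  by move=> _ Hi; rewrite wpS Hi.
split.
- move=> i Hi HHi.
  have := path_edge_in Hi.
  rewrite Hn; last lia. rewrite Hn; last lia.
  by rewrite Hstep // -addn1 PoszD addrA.
- rewrite lt0n; apply/negP => /eqP Hc.
  move: Hab; rewrite Hbw.
  rewrite -[l]add0n wp_stop /= ?perm1 ?eqxx //.
  move=> j Hj; apply/negP => HHj.
  have : (0 < count H (iota 0 l))%N.
    by rewrite -has_count; apply/hasP; exists j => //; rewrite mem_iota; lia.
  by rewrite Hc.
- move=> Hk.
  have Hk0 : (0 < count H (iota 0 l))%N.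
    rewrite lt0n; apply/negP => /eqP Hc.
    move: Hab; rewrite Hbw.
    rewrite -[l]add0n wp_stop /= ?perm1 ?eqxx //.
    move=> j Hj; apply/negP => HHj.
    have : (0 < count H (iota 0 l))%N.
      by rewrite -has_count; apply/hasP; exists j => //; rewrite mem_iota; lia.
    by rewrite Hc.
  have [i [Hil Hi Hc1 Hc2]] := central_exists Hk0 Hk.
  exists i; split => //.
    have [g Hg] := @code_exists H i h L (ltnW (leq_trans Hil HL)) Hc1.
    by exists g; apply: wp_ext.
  set m := (l - i.+1)%N.
  set H2 := fun j => H (i.+1 + j)%N && (j < m)%N.
  have HmL : (m <= L)%N by rewrite /m; lia.
  have Hc3 : (count H2 (iota 0 L) <= h)%N.
    have := count_split H2 m (L - m); rewrite subnKC // => ->.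
    have -> : count (fun j => H2 (m + j)%N) (iota 0 (L - m)) = 0%N.
      apply/eqP; rewrite -leqn0 leqNgt -has_count; apply/hasP => -[j _].
      by rewrite /H2; lia.
    rewrite addn0 (@eq_in_count _ _ (fun j => H (i.+1 + j)%N)) //.
    by move=> j; rewrite mem_iota /H2 => /andP[_ Hj]; rewrite add0n in Hj; rewrite Hj andbT.
  have [g Hg] := @code_exists H2 L h L (leqnn L) Hc3.
  exists g.
  rewrite Hbw (_ : l = i.+1 + m)%N; last by rewrite /m; lia.
  rewrite wp_add Hstep // -addn1 PoszD addrA.
  rewrite (@wp_ext _ _ _ _ _ H2); last by move=> j Hj; rewrite /H2 Hj andbT addn1.
  rewrite -(@wp_stop _ _ _ _ (L - m)); last by move=> j; rewrite /H2; lia.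
  rewrite subnKC //.
  by rewrite (@wp_ext _ _ _ _ _ (Sg g)) // => j Hj; rewrite Hg.
Qed.
End Summary.

End Part2.
Import Part2.

Module Part3.
Set Implicit Arguments. Unset Strict Implicit. Unset Printing Implicit Defensive.
Local Open Scope ring_scope.
Local Open Scope classical_set_scope.
Local Open Scope ereal_scope.

Section EsumAux.
Variable R : realType.

Lemma esumZ (T : choiceType) (S : set T) (c : R) (f : T -> \bar R) :
  (0 <= c)%R -> (forall x, 0 <= f x) ->
  \esum_(i in S) (c%:E * f i) = c%:E * \esum_(i in S) f i.
Proof.
move=> c0 f0; rewrite /esum -ereal_supZl //; last first.
  by apply/set0P; exists 0; exists set0; [exact: fsets_set0|rewrite fsbig_set0].
congr ereal_sup; apply/seteqP; split => y.
- move=> [A HA <-]; exists (\sum_(i \in A) f i); first by exists A.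
  by rewrite ge0_mule_fsumr.
- move=> [z [A HA <-] <-]; exists A => //.
  by rewrite ge0_mule_fsumr.
Qed.

Lemma esum_ge_sum (T : choiceType) (X : finType) (g : X -> T) (F : T -> \bar R) :
  injective g -> (forall y, 0 <= F y) ->
  \sum_(x : X) F (g x) <= \esum_(y in [set: T]) F y.
Proof.
move=> ginj F0.
have E x : F (g x) = \esum_(y in [set: T]) (if y \in [set g x] then F y else 0).
  by rewrite -esum_mkcond esum_set1.
rewrite (eq_bigr _ (fun x _ => E x)) -esum_sum; last first.
  by move=> y x _ _; case: ifP.
apply: le_esum => y _.
case: (pselect (exists x, y = g x)) => [[x0 ->]|Hn].
- rewrite (bigD1 x0) //= ifT; last by apply: mem_set.
  rewrite big1 ?adde0 // => x Hx; rewrite ifF //.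
  apply/negbTE/negP => /set_mem /= /ginj Hxx.
  by move: Hx; rewrite Hxx eqxx.
- rewrite big1 // => x _; rewrite ifF //.
  apply/negbTE/negP => /set_mem /= Hy; apply: Hn; by exists x.
Qed.

End EsumAux.

End Part3.
Import Part3.

Module Part4.
Set Implicit Arguments. Unset Strict Implicit. Unset Printing Implicit Defensive.
Local Open Scope ring_scope.

Section Main.
Variables (R : realType) (N : nat) (sched : seq {perm 'I_N})
  (Rt : 'I_N -> 'I_N -> int -> vpath N -> R) (r lam : R) (h L W : nat).

Definition mm : nat := (L.+1 ^ h)%N.
Definition Efin := ('I_N * 'I_(W + L))%type.

Definition edge (p : Efin) : vertex N * vertex N :=
  ((p.1, ((p.2 : nat) : int)),
   (pi_t sched ((p.2 : nat) : int) p.1, ((p.2 : nat) : int) + 1)).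

Definition Aset (p : Efin) (t : int) : {set 'I_N} :=
  [set (wp sched t ((p.2 : nat) - `|t|)%N (@Sg h L g))^-1%g p.1
     | g : {ffun 'I_h -> 'I_L.+1}].

Definition Bset (p : Efin) : {set 'I_N} :=
  [set wp sched (((p.2 : nat) : int) + 1) L (@Sg h L g)
        (pi_t sched ((p.2 : nat) : int) p.1) | g : {ffun 'I_h -> 'I_L.+1}].

Definition Dem (p : Efin) (t : int) (a b : 'I_N) : R :=
  lam * r / N%:R + (1 - lam) * r / mm%:R * ((a \in Aset p t) && (b \in Bset p))%:R.

Lemma mm_gt0 : (0 < mm)%N.
Proof. by rewrite /mm expn_gt0. Qed.

Lemma card_A p t : (#|Aset p t| <= mm)%N.
Proof.
apply: leq_trans (leq_imset_card _ _) _.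
by rewrite card_ffun !card_ord. 
Qed.

Lemma card_B p : (#|Bset p| <= mm)%N.
Proof.
apply: leq_trans (leq_imset_card _ _) _.
by rewrite card_ffun !card_ord.
Qed.


Lemma sum_ind_le (B : {set 'I_N}) (c : bool) :
  \sum_(b < N) ((c && (b \in B))%:R : R) <= #|B|%:R.
Proof.
apply: (@le_trans _ _ (\sum_(b < N) ((b \in B)%:R : R))).
  by apply: ler_sum => b _; case: c; case: (b \in B).
rewrite (eq_bigr (fun b => if b \in B then (1 : R) else 0)); last first.
  by move=> b _; case: (b \in B).
by rewrite -big_mkcond /= sumr_const.
Qed.

Hypothesis r_gt0 : 0 < r.
Hypothesis lam_ge0 : 0 <= lam.
Hypothesis lam_le1 : lam <= 1.
Hypothesis N_gt0 : (0 < N)%N.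

Lemma dem_le p : demand_le (Dem p) r.
Proof.
have mm0 : (0 : R) < mm%:R by rewrite ltr0n mm_gt0.
have N0 : (0 : R) < N%:R by rewrite ltr0n.
have c1 : 0 <= lam * r / N%:R by rewrite divr_ge0 // ?mulr_ge0 // ltW.
have c2 : 0 <= (1 - lam) * r / mm%:R by rewrite divr_ge0 ?mulr_ge0 ?subr_ge0 // ltW.
have Hsum1 : \sum_(b < N) lam * r / N%:R = lam * r.
  by rewrite sumr_const card_ord -[_ *+ N]mulr_natr divfK // gt_eqF.
have key (X : {set 'I_N}) : (#|X| <= mm)%N ->
   (1 - lam) * r / mm%:R * #|X|%:R <= (1 - lam) * r.
  move=> HX; rewrite -mulrA ler_piMr ?mulr_ge0 ?subr_ge0 ?(ltW r_gt0) //.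
  by rewrite ler_pdivrMl // mulr1 ler_nat.
split.
- move=> t a b; rewrite /Dem; apply: addr_ge0 => //; apply: mulr_ge0 => //; exact: ler0n.
- move=> t a; rewrite /Dem big_split /= Hsum1 -mulr_sumr.
  apply: (@le_trans _ _ (lam * r + (1 - lam) * r / mm%:R * #|Bset p|%:R)).
    by rewrite lerD2l ler_wpM2l // sum_ind_le.
  apply: (@le_trans _ _ (lam * r + (1 - lam) * r)); first by rewrite lerD2l key // card_B.
  by rewrite -mulrDl addrC subrK mul1r.
- move=> t b; rewrite /Dem big_split /= Hsum1 -mulr_sumr.
  apply: (@le_trans _ _ (lam * r + (1 - lam) * r / mm%:R * #|Aset p t|%:R)).
    rewrite lerD2l ler_wpM2l //.
    rewrite (eq_bigr (fun a => ((b \in Bset p) && (a \in Aset p t))%:R)); last by move=> a _; rewrite andbC.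
    by rewrite sum_ind_le.
  apply: (@le_trans _ _ (lam * r + (1 - lam) * r)); first by rewrite lerD2l key // card_A.
  by rewrite -mulrDl addrC subrK mul1r.
Qed.


Definition cmin : R := Num.min (lam * r * (h.*2.+2)%:R / N%:R)
                               (lam * r / N%:R + (1 - lam) * r / mm%:R).

Definition Se (p : Efin) : set (vpath N) :=
  [set P | is_path sched P /\ edge p \in path_edges P].

Lemma sum_ge_inj (X Y : finType) (Pr : pred X) (phi : X -> Y) (f : Y -> R) :
  injective phi -> (forall y, 0 <= f y) ->
  \sum_(x | Pr x) f (phi x) <= \sum_y f y.
Proof.
move=> inj f0.
rewrite (eq_bigl (fun x => x \in [set x | Pr x])); last by move=> x; rewrite inE.
rewrite -(big_imset f (in2W inj)) /= [X in _ <= X](bigID (fun y => y \in phi @: [set x | Pr x])) /=.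
by rewrite lerDl sumr_ge0.
Qed.

Lemma sum_const_count l (H : nat -> bool) (c : R) :
  \sum_(i < l | H i) c = c *+ count H (iota 0 l).
Proof.
by rewrite -(big_mkord H (fun _ => c)) big_const_seq iter_addr_0 /index_iota subn0.
Qed.

Lemma Dem_ge p t a b : lam * r / N%:R <= Dem p t a b.
Proof.
rewrite /Dem lerDl mulr_ge0 // ?ler0n // divr_ge0 ?ler0n // mulr_ge0 ?subr_ge0 //.
exact: ltW.
Qed.

Lemma key (P : vpath N) a b (t0 : 'I_W) :
  paths_from_to sched a b ((t0 : nat) : int) P -> (size P.2 <= L)%N -> a != b ->
  cmin <= \sum_(p : Efin) (if P \in Se p then Dem p ((t0 : nat) : int) a b else 0).
Proof.
move=> Hpt HL Hab.
have [He Hk0 Hc] := path_summary h Hpt HL Hab.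
have Hp : is_path sched P by case/and3P: Hpt.
set t : int := ((t0 : nat) : int).
set H := hop sched P; set l := size P.2.
have lt (i : 'I_l) : (t0 + i < W + L)%N.
  have := ltn_ord i; have := ltn_ord t0; rewrite /l in HL *; lia.
pose phi (i : 'I_l) : Efin := (wp sched t i H a, Ordinal (lt i)).
have phi_inj : injective phi.
  move=> i j /(congr1 (fun p : Efin => (p.2 : nat))) /= /eqP.
  by rewrite eqn_add2l => /eqP /val_inj.
have Hin (i : 'I_l) : H i -> P \in Se (phi i).
  move=> Hi; apply/mem_set; split => //.
  have := He i (ltn_ord i) Hi.
  by rewrite /edge /= PoszD.
have c0 : 0 <= lam * r / N%:R by rewrite divr_ge0 ?ler0n // mulr_ge0 // ltW.
have f0 (p : Efin) : 0 <= (if P \in Se p then Dem p t a b else 0).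
  by case: ifP => // _; exact: le_trans c0 (Dem_ge _ _ _ _).
apply: (le_trans _ (@sum_ge_inj _ _ (fun i : 'I_l => H i) phi _ phi_inj f0)).
rewrite (eq_bigr (fun i => Dem (phi i) t a b)); last by move=> i Hi; rewrite Hin.
case: (leqP (count H (iota 0 l)) h.*2.+1) => Hk.
- have [i0 [Hil Hi0 [g1 Hg1] [g2 Hg2]]] := Hc Hk.
  pose j : 'I_l := Ordinal Hil.
  rewrite (bigD1 j) //=.
  have HA : a \in Aset (phi j) t.
    apply/imsetP; exists g1 => //=.
    by rewrite addKn Hg1 permK.
  have HB : b \in Bset (phi j).
    apply/imsetP; exists g2 => //=.
  rewrite /Dem HA HB /= mulr1.
  apply: (@le_trans _ _ (lam * r / N%:R + (1 - lam) * r / mm%:R)).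
    by rewrite /cmin ge_min lexx orbT.
  rewrite -addrA lerD2l lerDl sumr_ge0 // => i _.
  exact: le_trans c0 (Dem_ge _ _ _ _).
- apply: (@le_trans _ _ (\sum_(i < l | H i) lam * r / N%:R)); last first.
    by apply: ler_sum => i _; exact: Dem_ge.
  rewrite sum_const_count.
  apply: (@le_trans _ _ (lam * r / N%:R *+ h.*2.+2)); last first.
    by apply: ler_wpMn2l.
  have E : lam * r * (h.*2.+2)%:R / N%:R = lam * r / N%:R *+ h.*2.+2 by rewrite mulrAC mulr_natr.
  by rewrite /cmin ge_min E lexx.
Qed.

End Main.

End Part4.
Import Part4.

Module Part5.
Set Implicit Arguments. Unset Strict Implicit. Unset Printing Implicit Defensive.
Local Open Scope ring_scope.

Section Chain.
Variables (R : realType) (N : nat) (sched : seq {perm 'I_N})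
  (Rt : 'I_N -> 'I_N -> int -> vpath N -> R) (r lam : R) (h L W : nat).
Hypothesis r_gt0 : 0 < r.
Hypothesis lam_ge0 : 0 <= lam.
Hypothesis lam_le1 : lam <= 1.
Hypothesis N_gt0 : (0 < N)%N.
Hypothesis Hdes : is_ORN_design sched Rt.
Hypothesis Hthr : guarantees_throughput sched Rt r.
Hypothesis Hlat : latency_bounded_by Rt L.

Local Notation D p := (Dem sched r lam h p).
Local Notation Ef := ('I_N * 'I_(W + L))%type.
Local Notation X := ('I_W * ('I_N * 'I_N))%type.
Definition cx (x : X) : R := if x.2.1 != x.2.2 then cmin N r lam h L else 0.

Lemma load_le1 (p : Ef) : (load sched (induced_flow Rt (D p)) (edge sched p) <= 1)%E.
Proof.
rewrite /edge; apply: (Hthr (dem_le sched h r_gt0 lam_ge0 lam_le1 N_gt0 p)).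
by rewrite /is_phys /= !eqxx.
Qed.

Lemma D_ge0 (p : Ef) t a b : 0 <= D p t a b.
Proof. by case: (dem_le sched h r_gt0 lam_ge0 lam_le1 N_gt0 p) => H _ _; apply: H. Qed.

Lemma Rt_ge0 a b t P : 0 <= Rt a b t P.
Proof. by case: Hdes => _ H _ _ _; apply: H. Qed.

Lemma cmin_ge0 : 0 <= cmin N r lam h L.
Proof.
rewrite /cmin le_min; apply/andP; split.
  by rewrite divr_ge0 ?ler0n // !mulr_ge0 ?ler0n // ltW.
by rewrite addr_ge0 // divr_ge0 ?ler0n // mulr_ge0 ?subr_ge0 // ltW.
Qed.

Local Open Scope ereal_scope.

Lemma chain :
  \sum_(x : X) (cx x)%:E <= \sum_(p : Ef) load sched (induced_flow Rt (D p)) (edge sched p).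
Proof.
pose xt (x : X) : int * ('I_N * 'I_N) := (((x.1 : nat) : int), x.2).
have xt_inj : injective xt.
  by move=> [i [a b]] [j [c d]]; rewrite /xt /= => -[] /val_inj -> -> ->.
pose G (p : Ef) (x : X) P := (D p ((x.1 : nat) : int) x.2.1 x.2.2 *
                              Rt x.2.1 x.2.2 ((x.1 : nat) : int) P)%:E.
have G0 p x P : 0 <= G p x P by rewrite lee_fin mulr_ge0 // ?D_ge0 ?Rt_ge0.
apply: (@le_trans _ _ (\sum_(p : Ef) \esum_(P in Se sched p) \sum_(x : X) G p x P)); last first.
  apply: lee_sum => p _; rewrite /load /induced_flow.
  apply: le_esum => P _.
  apply: (@esum_ge_sum _ _ _ xt (fun y => (D p y.1 y.2.1 y.2.2 * Rt y.2.1 y.2.2 y.1 P)%:E) xt_inj).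
  by move=> y; rewrite lee_fin mulr_ge0 // ?D_ge0 ?Rt_ge0.
have E1 : \sum_(p : Ef) \esum_(P in Se sched p) \sum_(x : X) G p x P =
  \sum_(x : X) \esum_(P in [set: vpath N])
      \sum_(p : Ef) (if P \in Se sched p then G p x P else 0).
  transitivity (\sum_(p : Ef) \esum_(P in [set: vpath N])
      \sum_(x : X) (if P \in Se sched p then G p x P else 0)).
    apply: eq_bigr => p _; rewrite esum_mkcond; apply: eq_esum => P _.
    by case: ifP => _ //; rewrite big1.
  rewrite -esum_sum; last by move=> P p _ _; apply: sume_ge0 => x _; case: ifP.
  transitivity (\esum_(P in [set: vpath N]) \sum_(x : X) \sum_(p : Ef)
      (if P \in Se sched p then G p x P else 0)).
    by apply: eq_esum => P _; exact: exchange_big.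
  by rewrite esum_sum // => P x _ _; apply: sume_ge0 => p _; case: ifP.
rewrite E1; apply: lee_sum => [[i [a b]]] _.
set t : int := ((i : nat) : int).
have pw P : ((cx (i, (a, b))) * Rt a b t P)%:E <=
    \sum_(p : Ef) (if P \in Se sched p then G p (i, (a, b)) P else 0).
  have -> : \sum_(p : Ef) (if P \in Se sched p then G p (i, (a, b)) P else 0) =
      ((\sum_(p : Ef) (if P \in Se sched p then D p t a b else 0)%R) * Rt a b t P)%:E.
    by rewrite mulr_suml -sumEFin; apply: eq_bigr => p _; case: ifP; rewrite ?mul0r.
  rewrite lee_fin.
  have [HR0|HRne] := eqVneq (Rt a b t P) 0%R; first by rewrite HR0 !mulr0.
  rewrite ler_wpM2r ?Rt_ge0 //.
  rewrite /cx /=; case: eqP => [Hab|Hab].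
    by rewrite sumr_ge0 // => p _; case: ifP => // _; exact: D_ge0.
  have Hpt : paths_from_to sched a b t P by case: Hdes => _ _ H _ _; apply: H.
  have HL : (size P.2 <= L)%N.
    have HRp : (0 < Rt a b t P)%R by rewrite lt0r HRne Rt_ge0.
    exact: Hlat HRp.
  by apply: (key h r_gt0 lam_ge0 lam_le1 N_gt0 Hpt HL); apply/eqP.
apply: (le_trans _ (le_esum (fun P _ => pw P))).
under eq_esum do rewrite EFinM.
rewrite esumZ; last by move=> P; rewrite lee_fin Rt_ge0.
  by case: Hdes => _ _ _ -> _; rewrite mule1.
by rewrite /cx; case: ifP => _ //; exact: cmin_ge0.
Qed.


Local Open Scope ring_scope.
Lemma sum_cx : (\sum_(x : X) cx x)%R = (cmin N r lam h L *+ N.-1 *+ N *+ W)%R.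
Proof.
rewrite -(pair_bigA _ (fun i ab => cx (i, ab))) /=.
rewrite (eq_bigr (fun _ => cmin N r lam h L *+ N.-1 *+ N)) ?sumr_const ?card_ord //.
move=> i _; rewrite -(pair_bigA _ (fun a b => cx (i, (a, b)))) /=.
rewrite (eq_bigr (fun _ => cmin N r lam h L *+ N.-1)) ?sumr_const ?card_ord //.
move=> a _; rewrite /cx /= -big_mkcond /=.
rewrite (eq_bigl (predC1 a)) => [|b]; last by rewrite /= eq_sym.
by rewrite sumr_const cardC1 card_ord.
Qed.

Lemma main_ineq :
  (cmin N r lam h L *+ N.-1 *+ N *+ W <= (N * (W + L))%:R)%R.
Proof.
rewrite -sum_cx -lee_fin -sumEFin.
apply: (le_trans chain).
apply: (@le_trans _ _ (\sum_(p : Ef) (1%:E))%E).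
  by apply: lee_sum => p _; exact: load_le1.
by rewrite sumEFin sumr_const card_prod !card_ord.
Qed.

End Chain.

End Part5.
Import Part5.

Module Part6.
Set Implicit Arguments. Unset Strict Implicit. Unset Printing Implicit Defensive.
Local Open Scope ring_scope.

Lemma L_ge1 (R : realType) N (sched : seq {perm 'I_N})
  (Rt : 'I_N -> 'I_N -> int -> vpath N -> R) L :
  (2 <= N)%N -> is_ORN_design sched Rt -> latency_bounded_by Rt L -> (1 <= L)%N.
Proof.
move=> HN [_ Hge0 Hpath Hsum _] Hlat.
have h0 : (0 < N)%N by lia.
have h1 : (1 < N)%N by lia.
pose a : 'I_N := Ordinal h0.
pose b : 'I_N := Ordinal h1.
have Hab : a != b by [].
case: (pselect (exists P, Rt a b 0 P != 0)) => [[P HP]|Hn]; last first.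
  have Hz P : Rt a b 0 P = 0.
    by apply/eqP/negPn/negP => H; apply: Hn; exists P.
  have := Hsum a b 0; rewrite esum1 => [H10|P _]; last by rewrite Hz.
  by move: H10 => /(congr1 fine) /= /eqP; rewrite eq_sym oner_eq0.
have Hpos : 0 < Rt a b 0 P by rewrite lt0r HP Hge0.
have HL := Hlat _ _ _ _ Hpos.
have /and3P[_ /eqP Hv /eqP Hb] := Hpath _ _ _ _ HP.
rewrite lt0n; apply/negP => /eqP HL0.
move: HL; rewrite HL0 /latency leqn0 size_eq0 => /eqP Hnil.
move: Hb; rewrite /path_last Hnil Hv /= => Hba.
by move: Hab; rewrite Hba eqxx.
Qed.

Lemma kappa_bound (R : realType) N (sched : seq {perm 'I_N})
  (Rt : 'I_N -> 'I_N -> int -> vpath N -> R) (r lam : R) h L (K : nat) :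
  0 < r -> 0 <= lam -> lam < 1 -> (2 <= N)%N ->
  is_ORN_design sched Rt -> guarantees_throughput sched Rt r ->
  latency_bounded_by Rt L -> (1 <= L)%N -> (1 <= K)%N ->
  K%:R * (lam * r * (h.*2.+2)%:R) < N%:R ->
  2 < K%:R * (lam * r * (h.*2.+2)%:R - 1) ->
  (1 - lam) * r * N%:R <= 2 ^+ h.+2 * L%:R ^+ h.
Proof.
move=> r0 l0 l1 HN Hdes Hthr Hlat HL HK Hn Hk.
have N0 : (0 < N)%N by lia.
have M := main_ineq h (K * L)%N r0 l0 (ltW l1) N0 Hdes Hthr Hlat.
set c := cmin N r lam h L in M.
move: M; rewrite -[_ *+ (K * L)%N]mulr_natr -[_ *+ N]mulr_natr -[_ *+ N.-1]mulr_natr.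
rewrite !natrM natrD natrM.
set n := (N%:R : R); set k := (K%:R : R); set l := (L%:R : R).
have En : ((N.-1)%:R : R) = n - 1 by rewrite /n -{2}(prednK N0) -natr1 addrK.
rewrite En => M.
have n0 : 0 < n by rewrite ltr0n.
have n2 : 2 <= n by rewrite (ler_nat R 2).
have lp : 1 <= l by rewrite (ler_nat R 1).
have kp : 1 <= k by rewrite (ler_nat R 1).
have M2 : c * (n - 1) * k <= k + 1.
  have nl0 : 0 < n * l by rewrite mulr_gt0 // (lt_le_trans ltr01).
  rewrite -(ler_pM2r nl0).
  have E1 : c * (n - 1) * k * (n * l) = c * (n - 1) * n * (k * l) by ring.
  have E2 : (k + 1) * (n * l) = n * (k * l + l) by ring.
  by rewrite E1 E2.
set th := lam * r * (h.*2.+2)%:R in Hn Hk.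
have r0' : 0 <= r by exact: ltW.
have mpos : (0 < mm h L)%N by rewrite /mm expn_gt0.
set m := ((mm h L)%:R : R).
have m0 : 0 < m by rewrite ltr0n.
move: M2; rewrite /c /cmin -/n -/m.
case: (leP (lam * r * (h.*2.+2)%:R / n) (lam * r / n + (1 - lam) * r / m)) => H12.
- rewrite -/th => M2.
  have M3 : th * (n - 1) * k <= n * (k + 1).
    have E : th * (n - 1) * k = (th / n * (n - 1) * k) * n by field; rewrite gt_eqF.
    by rewrite E [n * _]mulrC ler_pM2r.
  exfalso; nra.
- move=> M2.
  set q := (1 - lam) * r / m.
  have q0 : 0 <= q by rewrite /q divr_ge0 ?mulr_ge0 ?subr_ge0 ?(ltW l1) // ltW.
  have p0 : 0 <= lam * r / n by rewrite divr_ge0 ?mulr_ge0 // ltW.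
  have M3 : q * (n - 1) * k <= 2 * k.
    have nk0 : 0 <= (n - 1) * k.
      by rewrite mulr_ge0 ?subr_ge0 ?(le_trans _ n2) ?ler1n // (le_trans ler01).
    have M2q : (lam * r / n + q) * (n - 1) * k <= k + 1 := M2.
    nra.
  have M4 : q * (n - 1) <= 2.
    have k0 : 0 < k by apply: lt_le_trans kp.
    by rewrite -(ler_pM2r k0).
  have Eq : (1 - lam) * r = q * m by rewrite /q divfK // gt_eqF.
  have Hm : m <= 2 ^+ h * l ^+ h.
    rewrite /m /mm -exprMn natrX.
    apply: lerXn2r; rewrite ?nnegrE ?ler0n ?mulr_ge0 ?ler0n //.
    by rewrite -natr1 -/l; lra.
  have m0' : 0 <= q * (n - 1) by rewrite mulr_ge0 ?subr_ge0 // (le_trans _ n2) // ler1n.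
  have : (1 - lam) * r * (n - 1) <= 2 * m.
    by rewrite Eq mulrAC ler_wpM2r // ltW.
  rewrite exprS exprS -!mulrA => H.
  have lh0 : 0 <= 2 ^+ h * l ^+ h by rewrite mulr_ge0 // exprn_ge0 // (le_trans ler01).
  have a0 : 0 <= (1 - lam) * r by rewrite mulr_ge0 ?subr_ge0 // ltW.
  nra.
Qed.

Lemma h_facts (R : realType) (r : R) : 0 < r -> r <= 2^-1 ->
  [/\ (1 <= h_of r)%N, (h_of r)%:R <= 1 / (2 * r) & 1 / (2 * r) < (h_of r).+1%:R].
Proof.
move=> r0 rh.
have r2 : 2 * r <= 1.
  have : 2 * r <= 2 * 2^-1 by rewrite ler_pM2l.
  by rewrite mulfV.
have x1 : 1 <= 1 / (2 * r) by rewrite ler_pdivlMr ?mulr_gt0 // mul1r.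
split.
- by rewrite /h_of truncn_gt0.
- by rewrite /h_of truncn_le (le_trans ler01).
- exact: truncnS_gt.
Qed.

Lemma Lstar_le (R : realType) (r : R) N : 0 < r -> r <= 2^-1 -> (1 <= N)%N ->
  Lstar r N <= 2 * (h_of r)%:R * N%:R `^ ((h_of r)%:R)^-1.
Proof.
move=> r0 rh HN.
have [h1 hle hlt] := h_facts r0 rh.
rewrite /Lstar /eps_of.
set h := h_of r; set s := (h%:R)^-1 : R.
have hpos : (0 : R) < h%:R by rewrite ltr0n.
have N1 : (1 : R) <= N%:R by rewrite ler1n.
have A : N%:R `^ (h%:R + 1)^-1 <= N%:R `^ s.
  apply: ler_powR => //; rewrite lef_pV2 ?posrE ?ltr0n ?addr_gt0 //; lra.
have e0 : 0 <= h%:R + 1 - 1 / (2 * r).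
  by move: hlt; rewrite -natr1; lra.
have e1 : h%:R + 1 - 1 / (2 * r) <= 1 by lra.
have B : ((h%:R + 1 - 1 / (2 * r)) * N%:R) `^ s <= N%:R `^ s.
  apply: ge0_ler_powR; rewrite ?nnegrE ?invr_ge0 ?ler0n ?mulr_ge0 //.
  by rewrite ler_piMl ?ler0n.
rewrite (_ : 2 * h%:R * N%:R `^ s = h%:R * (N%:R `^ s + N%:R `^ s)); last by ring.
apply: ler_wpM2l; rewrite ?ler0n //.
lra.
Qed.


End Part6.
Import Part6.

Unset Implicit Arguments. Set Strict Implicit. Set Printing Implicit Defensive.
Local Open Scope ring_scope.

Theorem theorem3p2 (R : realType) (r : R) :
  0 < r -> r <= 2^-1 ->
  exists c : R, 0 < c /\
    forall (N : nat), (2 <= N)%N ->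
    forall (sched : seq {perm 'I_N})
           (Rt : 'I_N -> 'I_N -> int -> vpath N -> R),
      is_ORN_design sched Rt ->
      guarantees_throughput sched Rt r ->
      forall L : nat, latency_bounded_by Rt L ->
        c * Lstar r N <= L%:R.
Proof.
move=> r0 rh.
have [h1 hle hlt] := h_facts r0 rh.
set h := h_of r in h1 hle hlt *.
set rho := r * (h.*2.+2)%:R.
have Erho : ((h.*2.+2)%:R : R) = 2 * h.+1%:R by rewrite -doubleS -mul2n natrM.
have rho1 : 1 < rho.
  move: hlt; rewrite ltr_pdivrMr ?mulr_gt0 // /rho Erho -natr1; lra.
set lam := (1 + rho) / (2 * rho).
have rho0 : 0 < rho by lra.
have lam0 : 0 <= lam by rewrite /lam divr_ge0 //; lra.
have lam1 : lam < 1 by rewrite /lam ltr_pdivrMr; lra.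
set th := (1 + rho) / 2.
have Eth : lam * r * (h.*2.+2)%:R = th by rewrite -mulrA -/rho /lam /th; field; lra.
have th1 : 1 < th by rewrite /th; lra.
set K := (Num.truncn (2 / (th - 1))).+1.
have HK : 2 < K%:R * (th - 1).
  have := truncnS_gt (2 / (th - 1)); rewrite -/K ltr_pdivrMr; last lra.
  by [].
have K1 : (1 <= K)%N by [].
set N0 := (Num.truncn (K%:R * th)).+2.
have HN0 : K%:R * th < N0.-1%:R by exact: truncnS_gt.
set kap := (1 - lam) * r / 2 ^+ h.+2.
have kap0 : 0 < kap by rewrite /kap divr_gt0 ?exprn_gt0 // mulr_gt0 // subr_gt0.
set s := ((h%:R)^-1 : R).
have hpos : (0 : R) < h%:R by rewrite ltr0n.
have s0 : 0 <= s by rewrite /s invr_ge0 ltW.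
have s1 : s <= 1 by rewrite /s invr_le1 ?ler1n // unitfE gt_eqF.
set c := Num.min (kap `^ s / (2 * h%:R)) (1 / (2 * h%:R * N0%:R)).
have N0pos : (0 : R) < N0%:R by rewrite ltr0n.
have cpos : 0 < c.
  rewrite lt_min; apply/andP; split; apply: divr_gt0; rewrite ?powR_gt0 // ?mulr_gt0 // ?ltr01 //.
exists c; split => //.
move=> N HN sched Rt Hdes Hthr L Hlat.
have L1 := L_ge1 HN Hdes Hlat.
have l1 : (1 : R) <= L%:R by rewrite ler1n.
have Lst := Lstar_le r0 rh (ltnW HN).
rewrite -/h -/s in Lst.
have c0 : 0 <= c := ltW cpos.
have N1 : (1 : R) <= N%:R by rewrite ler1n; exact: ltnW HN.
apply: (le_trans (ler_wpM2l c0 Lst)).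
case: (ltnP N N0) => HNN0.
- have E1 : N%:R `^ s <= N0%:R.
    apply: le_trans (ler1_powR N1 s1) _; rewrite ler_nat; exact: ltnW.
  apply: (@le_trans _ _ (1 / (2 * h%:R * N0%:R) * (2 * h%:R * N0%:R))); last first.
    by rewrite mulrC mulrA mulr1 mulfV ?gt_eqF ?mulr_gt0.
  apply: (@le_trans _ _ (1 / (2 * h%:R * N0%:R) * (2 * h%:R * N%:R `^ s))).
    by apply: ler_wpM2r; rewrite ?mulr_ge0 ?powR_ge0 ?ler0n // /c ge_min lexx orbT.
  apply: ler_wpM2l; first by rewrite divr_ge0 ?mulr_ge0 ?ler0n.
  by apply: ler_wpM2l; rewrite ?mulr_ge0 ?ler0n.
- have Hn : K%:R * (lam * r * (h.*2.+2)%:R) < N%:R.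
    rewrite Eth; apply: lt_le_trans HN0 _; rewrite ler_nat; exact: leq_trans (leq_pred N0) HNN0.
  have HK' : 2 < K%:R * (lam * r * (h.*2.+2)%:R - 1) by rewrite Eth.
  have KB := kappa_bound r0 lam0 lam1 HN Hdes Hthr Hlat L1 K1 Hn HK'.
  have KB2 : kap * N%:R <= L%:R ^+ h.
    by rewrite /kap mulrAC ler_pdivrMr ?exprn_gt0 // [X in _ <= X]mulrC.
  have KB3 : (kap * N%:R) `^ s <= L%:R.
    have : (L%:R ^+ h) `^ s = (L%:R : R).
      rewrite -powR_mulrn ?ler0n // -powRrM /s mulfV ?gt_eqF // powRr1 // ler0n.
    have kn0 : 0 <= kap * N%:R by rewrite mulr_ge0 ?ler0n // ltW.
    move=> <-; apply: ge0_ler_powR => //; first by rewrite nnegrE exprn_ge0 ?ler0n.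
  rewrite powRM ?ler0n ?(ltW kap0) // in KB3.
  apply: le_trans KB3.
  apply: (@le_trans _ _ (kap `^ s / (2 * h%:R) * (2 * h%:R * N%:R `^ s))).
    by apply: ler_wpM2r; rewrite ?mulr_ge0 ?powR_ge0 ?ler0n // /c ge_min lexx.
  by rewrite mulrA divfK ?gt_eqF ?mulr_gt0.
Qed.
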